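(* Consider online non-preemptive scheduling of jobs on $k\ge1$ identical machines, where each job $j$ has a release time $r_j$ and a processing time $p_j$ known at release, and the flow time of a job is its completion time minus its release time. Let FIFO be the algorithm that, whenever some machine is idle and some released job is not yet started, starts the released unstarted job with the earliest release time on an idle machine. Let $P$ be the maximum processing time of all jobs and $D\ge0$. If for any two time points $a\le b$ the total processing time of jobs released in $[a,b]$ is at most $k(b-a)+D$, then the maximum flow time achieved by FIFO is at most $\frac{D}{k}+\frac{2(k-1)P}{k}$. *)

(* Defs.v *)
From HB Require Import structures.
From mathcomp Require Import all_boot all_order all_algebra.
Set Implicit Arguments. Unset Strict Implicit. Unset Printing Implicit Defensive.
Import Order.TTheory GRing.Theory Num.Theory.
Local Open Scope ring_scope.

Section Sched.
Variables (R : realFieldType) (k n : nat).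
Variables (r p : 'I_n -> R).
Variables (S : 'I_n -> R) (mach : 'I_n -> 'I_k).

Definition busy (m : 'I_k) (t : R) : Prop :=
  exists i : 'I_n, mach i = m /\ S i <= t /\ t < S i + p i.

(* A (non-preemptive) schedule produced by FIFO, with arbitrary tie-breaking
   and arbitrary choice among idle machines:
   - no job starts before its release;
   - jobs assigned to the same machine do not overlap;
   - whenever a released job is still unstarted at time t, no machine is idle at t;
   - when a job j is started, every released job with strictly earlier release
     time has already been started (possibly at the same instant). *)
Definition fifo_schedule : Prop :=
  [/\ (forall j, r j <= S j),
      (forall i j, i != j -> mach i = mach j ->
                   S i + p i <= S j \/ S j + p j <= S i),
      (forall j t, r j <= t -> t < S j -> forall m : 'I_k, busy m t)
    & (forall i j, r i <= S j -> r i < r j -> S i <= S j)].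

End Sched.

(* maximum processing time of all jobs (0 if there are no jobs) *)
Definition maxp (R : realFieldType) (n : nat) (p : 'I_n -> R) : R :=
  \big[Num.max/0]_(j < n) p j.

Definition released_work (R : realFieldType) (n : nat) (r p : 'I_n -> R) (a b : R) : R :=
  \sum_(j < n | (a <= r j) && (r j <= b)) p j.

(* Main.v *)
Require Import Defs.
From HB Require Import structures.
From mathcomp Require Import all_boot all_order all_algebra.
From mathcomp Require Import lra.
From Stdlib Require Import Classical_Prop.
Import Order.TTheory GRing.Theory Num.Theory.
Local Open Scope ring_scope.

Definition ov {R : realFieldType} (s e x y : R) : R :=
  Num.max 0 (Num.min e y - Num.max s x).

Lemma ov_ge0 {R : realFieldType} (s e x y : R) : 0 <= ov s e x y.
Proof. by rewrite /ov le_max lexx. Qed.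

Lemma ov_ge {R : realFieldType} (s e x y : R) :
  Num.min e y - Num.max s x <= ov s e x y.
Proof. by rewrite /ov le_max lexx orbT. Qed.

Lemma ov_le0 {R : realFieldType} (s e x y : R) :
  Num.min e y <= Num.max s x -> ov s e x y <= 0.
Proof. move=> h; rewrite /ov ge_max lexx /=; rewrite subr_le0 //. Qed.

Lemma ov_lep {R : realFieldType} (s e x y : R) :
  s <= e -> ov s e x y <= e - s.
Proof.
move=> h; rewrite /ov ge_max subr_ge0 h /=.
have h1 : Num.min e y <= e by rewrite ge_min lexx.
have h2 : s <= Num.max s x by rewrite le_max lexx.
lra.
Qed.

Lemma ov_mono {R : realFieldType} (s e x x' y : R) :
  x <= x' -> ov s e x' y <= ov s e x y.
Proof.
move=> h; rewrite /ov ge_max le_max lexx /=.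
have : Num.max s x <= Num.max s x'.
  by rewrite ge_max !le_max lexx /= h orbT.
move=> h2.
rewrite le_max; apply/orP; right; lra.
Qed.

Lemma cover {R : realFieldType} (n : nat) (s e : 'I_n -> R) (N : nat) :
  forall (A : {set 'I_n}) (x y : R), (#|A| <= N)%N ->
  (forall t, x <= t -> t < y -> exists2 i, i \in A & (s i <= t) && (t < e i)) ->
  y - x <= \sum_(i in A) ov (s i) (e i) x y.
Proof.
elim: N => [|N IH] A x y hA cov.
  case: (lerP y x) => hxy.
    by rewrite (le_trans _ (sumr_ge0 _ (fun i _ => ov_ge0 _ _ _ _))) // subr_le0.
  have [i iA _] := cov x (lexx x) hxy.
  by move: hA; rewrite leqn0 => /eqP/cards0_eq A0; rewrite A0 inE in iA.
case: (lerP y x) => hxy.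
  by rewrite (le_trans _ (sumr_ge0 _ (fun i _ => ov_ge0 _ _ _ _))) // subr_le0.
have [i iA /andP [h1 h2]] := cov x (lexx x) hxy.
rewrite (big_setD1 i iA) /=.
have hmx : Num.max (s i) x = x by apply/eqP; rewrite eq_le ge_max h1 lexx le_max lexx orbT.
case: (lerP y (e i)) => hey.
  have hm : Num.min (e i) y = y by apply/eqP; rewrite eq_le ge_min lexx orbT le_min lexx hey.
  have := ov_ge (s i) (e i) x y; rewrite hm hmx => h.
  have : 0 <= \sum_(l in A :\ i) ov (s l) (e l) x y := sumr_ge0 _ (fun l _ => ov_ge0 _ _ _ _).
  lra.
have hm : Num.min (e i) y = e i by apply/eqP; rewrite eq_le ge_min lexx le_min lexx (ltW hey).
have := ov_ge (s i) (e i) x y; rewrite hm hmx => h.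
have hA' : (#|A :\ i| <= N)%N.
  by move: hA; rewrite (cardsD1 i A) iA.
have := IH (A :\ i) (e i) y hA'.
have cov' : forall t, e i <= t -> t < y ->
    exists2 l, l \in A :\ i & (s l <= t) && (t < e l).
  move=> t ht1 ht2.
  have [l lA hl] := cov t (le_trans (ltW h2) ht1) ht2.
  exists l => //; rewrite in_setD1 lA andbT.
  apply/eqP => eli; move: hl; rewrite eli => /andP [_]; rewrite ltNge ht1.
  done.
move=> /(_ cov') h3.
have h4 : \sum_(l in A :\ i) ov (s l) (e l) (e i) y <= \sum_(l in A :\ i) ov (s l) (e l) x y.
  by apply: ler_sum => l _; apply: ov_mono; apply: ltW.
lra.
Qed.

Lemma seq_min {R : realFieldType} (s : seq R) (P : R -> Prop) :
  (exists2 x, x \in s & P x) ->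
  exists x, [/\ x \in s, P x & forall y, y \in s -> P y -> x <= y].
Proof.
elim: s => [|a s IH]; first by case.
move=> [x xs Px].
case: (classic (exists2 x, x \in s & P x)) => [/IH [m [ms Pm hm]] | hn].
  case: (classic (P a)) => Pa.
    case: (lerP a m) => ham.
      exists a; split => //; first by rewrite inE eqxx.
      move=> y; rewrite inE => /orP [/eqP -> //|ys Py].
      exact: le_trans ham (hm y ys Py).
    exists m; split => //; first by rewrite inE ms orbT.
    move=> y; rewrite inE => /orP [/eqP -> _|ys Py]; first exact: ltW.
    exact: hm.
  exists m; split => //; first by rewrite inE ms orbT.
  move=> y; rewrite inE => /orP [/eqP -> //|ys Py]; exact: hm.
exists a; split; first by rewrite inE eqxx.
- move: xs; rewrite inE => /orP [/eqP <- //|xs]; by case: hn; exists x.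
- move=> y; rewrite inE => /orP [/eqP -> //|ys Py]; by case: hn; exists y.
Qed.

Lemma le_maxp {R : realFieldType} (n : nat) (p : 'I_n -> R) i : p i <= maxp p.
Proof.
rewrite /maxp.
have : i \in index_enum 'I_n by rewrite mem_index_enum.
elim: (index_enum _) => [//|a s IH]; rewrite inE big_cons => /orP [/eqP ->|iS].
  by rewrite le_max lexx.
by rewrite le_max (IH iS) orbT.
Qed.

Theorem lemma4p6 (R : realFieldType) (k n : nat) (r p S : 'I_n -> R)
    (mach : 'I_n -> 'I_k) (D : R) :
  (1 <= k)%N ->
  (forall j, 0 < p j) ->
  0 <= D ->
  (forall a b : R, a <= b -> released_work r p a b <= k%:R * (b - a) + D) ->
  fifo_schedule r p S mach ->
  forall j : 'I_n,
    S j + p j - r j <= D / k%:R + 2%:R * (k%:R - 1) * maxp p / k%:R.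
Proof.
move=> hk hp hD hW [hrel hov hbusy hfifo] j.
set P := maxp p.
have pP : forall i, p i <= P := fun i => le_maxp _ p i.
have hK : 0 < (k%:R : R) by rewrite ltr0n.
have hK1 : 1 <= (k%:R : R) by rewrite ler1n.
have hpjD : p j <= D.
  have := hW (r j) (r j) (lexx _); rewrite subrr mulr0 add0r.
  apply: le_trans; rewrite /released_work (bigD1 j) ?lexx //=.
  rewrite lerDl; apply: sumr_ge0 => i _; exact: ltW.
have P0 : 0 <= P by apply: le_trans (ltW (hp j)) (pP j).
have key : k%:R * (S j - r j) <= (k%:R - 1) * P + D - p j.
  case: (lerP (S j) (r j)) => hSr.
    have : k%:R * (S j - r j) <= 0 by rewrite pmulr_rle0 // subr_le0.
    have : 0 <= (k%:R - 1) * P by apply: mulr_ge0 => //; lra.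
    lra.
  pose cand := [seq r i | i <- enum 'I_n] ++ [seq S i | i <- enum 'I_n].
  have rc : forall i, r i \in cand.
    by move=> i; rewrite mem_cat; apply/orP; left; apply: map_f; rewrite mem_enum.
  have sc : forall i, S i \in cand.
    by move=> i; rewrite mem_cat; apply/orP; right; apply: map_f; rewrite mem_enum.
  pose Q := fun c => c <= r j /\
     forall t, c <= t -> t < S j -> forall m, busy p S mach m t.
  have [ts [_ [tsr tsbusy] tsmin]] : exists x, [/\ x \in cand, Q x &
      forall y, y \in cand -> Q y -> x <= y].
    apply: seq_min; exists (r j) => //; split => //; exact: hbusy.
  have h1 : forall i, ts <= S i -> S i < S j -> ts <= r i /\ r i <= r j.
    move=> i hi1 hi2.
    have rij : r i <= r j.
      case: (lerP (r i) (r j)) => // hlt.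
      have := hfifo j i (le_trans (ltW hlt) (hrel i)) hlt; lra.
    split => //.
    case: (lerP ts (r i)) => // hlt.
    have : ts <= r i; last by lra.
    apply: tsmin (rc i) _; split => //.
    move=> t ht1 ht2 m.
    case: (ltP t ts) => ht3.
      by apply: (hbusy i) => //; lra.
    exact: tsbusy.
  have [m0 hm0] : exists m0, forall i, mach i = m0 -> S i < ts -> S i + p i <= ts.
    case: (classic (exists m0, forall i, mach i = m0 -> S i < ts -> S i + p i <= ts)) => // hneg.
    have hall : forall m, exists i, (mach i = m) /\ (S i < ts /\ ts < S i + p i).
      move=> m; apply: NNPP => hn; apply: hneg; exists m => i hm hs.
      case: (lerP (S i + p i) ts) => // hlt; case: hn; exists i; done.
    have [g hg] := fin_all_exists hall.
    have [x [xin _ xmin]] := seq_min [seq - S (g m) | m <- enum 'I_k] (fun _ => True)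
       (ex_intro2 _ _ (- S (g (Ordinal hk))) (map_f _ (mem_enum _ _)) I).
    move/mapP: xin => [m1 _ xm1].
    have hm1 : forall m, S (g m) <= S (g m1).
      move=> m; have := xmin (- S (g m)) (map_f _ (mem_enum _ _)) I; rewrite xm1; lra.
    have [_ [hgs1 hgs2]] := hg m1.
    have : ts <= S (g m1); last by lra.
    apply: tsmin (sc _) _; split; first by lra.
    move=> t ht1 ht2 m.
    case: (ltP t ts) => ht3; last exact: tsbusy.
    have [hgm [hgm1 hgm2]] := hg m.
    exists (g m); split => //; split; [exact: le_trans (hm1 m) ht1 | lra].
  pose F := fun i => ov (S i) (S i + p i) ts (S j).
  have h3 : forall m, S j - ts <= \sum_(i | mach i == m) F i.
    move=> m.
    have := @cover R n S (fun i => S i + p i) #|[set i | mach i == m]| [set i | mach i == m] ts (S j) (leqnn _).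
    rewrite (eq_bigl (fun i => mach i == m)); last by move=> i; rewrite inE.
    apply => t ht1 ht2.
    have [i [hi1 [hi2 hi3]]] := tsbusy t ht1 ht2 m.
    by exists i; rewrite ?inE ?hi1 ?eqxx // hi2 hi3.
  have h4 : k%:R * (S j - ts) <= \sum_i F i.
    rewrite (partition_big mach xpredT) //=.
    have -> : k%:R * (S j - ts) = \sum_(m < k) (S j - ts).
      by rewrite sumr_const card_ord mulr_natl.
    by apply: ler_sum => m _; apply: h3.
  have h5 : \sum_(i | S i < ts) F i <= (k%:R - 1) * P.
    pose B := [set i | (S i < ts) && (ts < S i + p i)].
    have e1 : \sum_(i | S i < ts) F i <= \sum_(i | S i < ts) (if ts < S i + p i then P else 0).
      apply: ler_sum => i hi; case: ifP => hc.
        rewrite /F; have hle : S i <= S i + p i by have := hp i; lra.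
        have := ov_lep _ _ ts (S j) hle; have := pP i; lra.
      apply: ov_le0; rewrite ge_min; apply/orP; left.
      rewrite le_max; apply/orP; right; rewrite leNgt hc //.
    apply: (le_trans e1); rewrite -big_mkcondr /=.
    rewrite (eq_bigl (fun i => i \in B)); last by move=> i; rewrite inE.
    rewrite sumr_const -[P *+ _]mulr_natl; apply: ler_wpM2r => //.
    have hB : (#|B| <= k.-1)%N.
      rewrite -(card_in_imset (f := mach)); last first.
        move=> i i'; rewrite !inE => /andP [a1 a2] /andP [b1 b2] hm.
        apply/eqP; apply: contraT => hne.
        case: (hov i i' hne hm); lra.
      apply: (leq_trans (subset_leq_card (_ : mach @: B \subset [set~ m0]))).
        2: by rewrite cardsC1 card_ord.
      apply/subsetP => m /imsetP [i iB ->]; rewrite !inE; apply/eqP => h.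
      move: iB; rewrite inE => /andP [b1 b2]; have := hm0 i h b1; lra.
    have -> : (k%:R - 1 : R) = (k - 1)%:R by rewrite natrB.
    by rewrite ler_nat subn1.
  have h6 : \sum_(i | ~~ (S i < ts)) F i <= released_work r p ts (r j) - p j.
    rewrite /released_work [X in _ <= X - _](bigD1 j) ?tsr ?lexx //=.
    rewrite addrAC subrr add0r.
    have e1 : \sum_(i | ~~ (S i < ts)) F i <= \sum_(i | ~~ (S i < ts)) (if S i < S j then p i else 0).
      apply: ler_sum => i hi; case: ifP => hc.
        rewrite /F; have hle : S i <= S i + p i by have := hp i; lra.
        have := ov_lep _ _ ts (S j) hle; lra.
      apply: ov_le0; rewrite ge_min; apply/orP; right.
      rewrite le_max; apply/orP; left; rewrite leNgt hc //.
    apply: (le_trans e1); rewrite -big_mkcondr /=.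
    rewrite big_mkcond [X in _ <= X]big_mkcond /=; apply: ler_sum => i _.
    case: ifP => [/andP [c1 c2]|_]; last by case: ifP => // _; exact: ltW.
    have c0 : ts <= S i by rewrite leNgt.
    have [c3 c4] := h1 i c0 c2.
    rewrite c3 c4 /=; case: eqP => [eij|_] //.
    by move: c2; rewrite eij ltxx.
  have h7 := hW ts (r j) tsr.
  move: h4; rewrite (bigID (fun i => S i < ts)) /= => h4.
  move: h4 h7; rewrite !mulrBr; lra.
rewrite -mulrDl ler_pdivlMr //.
have : (k%:R - 1) * p j <= (k%:R - 1) * P by apply: ler_wpM2l; [lra | exact: pP].
move: key; rewrite !mulrBl !mulrBr !mulrDl ?mulrDr !mul1r.
rewrite (mulrC (S j)) (mulrC (p j)) (mulrC (r j)).
move=> *; lra.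
Qed.
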